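(* For real $a,c,d$ and integer $k$, let \[ \begin{aligned} \lambda(k,a,c,d)={}&k^3\left(6a^4-6a^3+a^2+2ac+2d\right)\\ &+k^2\left(-384a^5+324a^4-42a^3-144a^2c-6ac-192ad-12d\right)\\ &+k\left(4608a^6-3072a^5+618a^4+2304a^3c-36a^3+144a^2c+4608a^2d-a^2+4ac+576ad+22d\right)\\ &+4608a^6-2688a^5-6144a^4c+300a^4-24576a^3d-4608a^2d-384ad-12d. \end{aligned} \] Let $a>\frac{22}{10}$, and let $c,d$ satisfy \[ \tfrac{1}{192}\left(-768a^3+768a^2-160a+7\right)\le c\le \tfrac{1}{512}\left(-1536a^3+1728a^2-424a+25\right), \] \[ \tfrac12\left(-6a^4+6a^3-a^2-2ac\right)\le d\le \tfrac{1}{2048}\left(768a^3-512a^2-512ac+104a+192c-7\right). \] Then there exists an integer $k\ge 4$ such that $\lambda(k,a,c,d)<0$. *)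

(* Defs.v *)
From Stdlib Require Import Reals ZArith.
Open Scope R_scope.

Definition lam (k : Z) (a c d : R) : R :=
  let x := IZR k in
    x ^ 3 * (6 * a ^ 4 - 6 * a ^ 3 + a ^ 2 + 2 * a * c + 2 * d)
  + x ^ 2 * (- 384 * a ^ 5 + 324 * a ^ 4 - 42 * a ^ 3 - 144 * a ^ 2 * c
             - 6 * a * c - 192 * a * d - 12 * d)
  + x * (4608 * a ^ 6 - 3072 * a ^ 5 + 618 * a ^ 4 + 2304 * a ^ 3 * c
         - 36 * a ^ 3 + 144 * a ^ 2 * c + 4608 * a ^ 2 * d - a ^ 2
         + 4 * a * c + 576 * a * d + 22 * d)
  + (4608 * a ^ 6 - 2688 * a ^ 5 - 6144 * a ^ 4 * c + 300 * a ^ 4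
     - 24576 * a ^ 3 * d - 4608 * a ^ 2 * d - 384 * a * d - 12 * d).

(* Main.v *)
Require Import Defs.
From Stdlib Require Import Reals ZArith Lra Psatz.
Open Scope R_scope.

Definition lamR (x a c d : R) : R :=
    x ^ 3 * (6 * a ^ 4 - 6 * a ^ 3 + a ^ 2 + 2 * a * c + 2 * d)
  + x ^ 2 * (- 384 * a ^ 5 + 324 * a ^ 4 - 42 * a ^ 3 - 144 * a ^ 2 * c
             - 6 * a * c - 192 * a * d - 12 * d)
  + x * (4608 * a ^ 6 - 3072 * a ^ 5 + 618 * a ^ 4 + 2304 * a ^ 3 * c
         - 36 * a ^ 3 + 144 * a ^ 2 * c + 4608 * a ^ 2 * d - a ^ 2
         + 4 * a * c + 576 * a * d + 22 * d)
  + (4608 * a ^ 6 - 2688 * a ^ 5 - 6144 * a ^ 4 * c + 300 * a ^ 4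
     - 24576 * a ^ 3 * d - 4608 * a ^ 2 * d - 384 * a * d - 12 * d).

Definition clo (a : R) := / 192 * (- 768 * a ^ 3 + 768 * a ^ 2 - 160 * a + 7).
Definition chi (a : R) := / 512 * (- 1536 * a ^ 3 + 1728 * a ^ 2 - 424 * a + 25).
Definition dlo (a c : R) := / 2 * (- 6 * a ^ 4 + 6 * a ^ 3 - a ^ 2 - 2 * a * c).

Lemma mulnp (U Q : R) : 0 <= U -> Q <= 0 -> U * Q <= 0.
Proof. intros; nra. Qed.

Lemma subst_ax (a x : R) : 11/5 < a -> 35*a <= x -> x <= 35*a+1 ->
  exists u s, a = u + 11/5 /\ x = 35*(u+11/5)+s /\ 0 < u /\ 0 <= s /\ s <= 1.
Proof. intros. exists (a - 11/5), (x - 35*a). repeat split; lra. Qed.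

Lemma spow (s : R) : 0 <= s -> s <= 1 ->
  (0 <= s^2 <= 1) /\ (0 <= s^3 <= 1) /\ (0 <= s^4 <= 1) /\ (0 <= s^5 <= 1) /\ (0 <= s^6 <= 1).
Proof.
  intros H0 H1.
  assert (forall n, 0 <= s^n <= 1).
  { induction n; simpl; [lra|]. destruct IHn. split; nra. }
  repeat split; apply H.
Qed.

Lemma Cneg (a x : R) : 11/5 < a -> 35*a <= x -> x <= 35*a+1 -> lamR x a 0 1 - lamR x a 0 0 < 0.
Proof.
  intros H1 H2 H3.
  destruct (subst_ax a x H1 H2 H3) as (u & s & -> & -> & Hu & Hs0 & Hs1).
  pose proof (spow s Hs0 Hs1) as [Q2 [Q3 [Q4 [Q5 Q6]]]].
  assert (h0 : (-16344816/125) * s^0 + (-193292/25) * s^1 + (138/5) * s^2 + (2) * s^3 < 0) by lra.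
  assert (h1 : u^1 * ((-4523428/25) * s^0 + (-33924/5) * s^1 + (18) * s^2) <= 0) by (apply mulnp; [apply pow_le; lra | lra]).
  assert (h2 : u^2 * ((-416358/5) * s^0 + (-1482) * s^1) <= 0) by (apply mulnp; [apply pow_le; lra | lra]).
  assert (h3 : u^3 * ((-12746) * s^0) <= 0) by (apply mulnp; [apply pow_le; lra | lra]).
  unfold lamR, clo, chi, dlo. lra.
Qed.

Lemma P0neg (a x : R) : 11/5 < a -> 35*a <= x -> x <= 35*a+1 -> lamR x a (clo a) (dlo a (clo a)) < 0.
Proof.
  intros H1 H2 H3.
  destruct (subst_ax a x H1 H2 H3) as (u & s & -> & -> & Hu & Hs0 & Hs1).
  pose proof (spow s Hs0 Hs1) as [Q2 [Q3 [Q4 [Q5 Q6]]]].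
  assert (h0 : (-1567224747/25000) * s^0 + (-8361481293/100000) * s^1 + (-21786831/20000) * s^2 < 0) by lra.
  assert (h1 : u^1 * ((-8292261951/20000) * s^0 + (-781739493/4000) * s^1 + (-8012229/4000) * s^2) <= 0) by (apply mulnp; [apply pow_le; lra | lra]).
  assert (h2 : u^2 * ((-148539969/200) * s^0 + (-72907063/400) * s^1 + (-137797/100) * s^2) <= 0) by (apply mulnp; [apply pow_le; lra | lra]).
  assert (h3 : u^3 * ((-97811789/160) * s^0 + (-847991/10) * s^1 + (-2102/5) * s^2) <= 0) by (apply mulnp; [apply pow_le; lra | lra]).
  assert (h4 : u^4 * ((-1048653/4) * s^0 + (-19684) * s^1 + (-48) * s^2) <= 0) by (apply mulnp; [apply pow_le; lra | lra]).
  assert (h5 : u^5 * ((-57214) * s^0 + (-1824) * s^1) <= 0) by (apply mulnp; [apply pow_le; lra | lra]).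
  assert (h6 : u^6 * ((-5040) * s^0) <= 0) by (apply mulnp; [apply pow_le; lra | lra]).
  unfold lamR, clo, chi, dlo. lra.
Qed.

Lemma P1neg (a x : R) : 11/5 < a -> 35*a <= x -> x <= 35*a+1 -> lamR x a (chi a) (dlo a (chi a)) < 0.
Proof.
  intros H1 H2 H3.
  destruct (subst_ax a x H1 H2 H3) as (u & s & -> & -> & Hu & Hs0 & Hs1).
  pose proof (spow s Hs0 Hs1) as [Q2 [Q3 [Q4 [Q5 Q6]]]].
  assert (h0 : (-4697664417567/5000000) * s^0 + (6485530491/4000000) * s^1 + (630486153/800000) * s^2 < 0) by lra.
  assert (h1 : u^1 * ((-12936324028131/4000000) * s^0 + (42021676791/800000) * s^1 + (16312851/6400) * s^2) <= 0) by (apply mulnp; [apply pow_le; lra | lra]).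
  assert (h2 : u^2 * ((-921708131427/200000) * s^0 + (1876062309/16000) * s^1 + (602727/200) * s^2) <= 0) by (apply mulnp; [apply pow_le; lra | lra]).
  assert (h3 : u^3 * ((-113328773241/32000) * s^0 + (10754211/100) * s^1 + (16881/10) * s^2) <= 0) by (apply mulnp; [apply pow_le; lra | lra]).
  assert (h4 : u^4 * ((-317647053/200) * s^0 + (247923/5) * s^1 + (456) * s^2) <= 0) by (apply mulnp; [apply pow_le; lra | lra]).
  assert (h5 : u^5 * ((-20775651/50) * s^0 + (57216/5) * s^1 + (48) * s^2) <= 0) by (apply mulnp; [apply pow_le; lra | lra]).
  assert (h6 : u^6 * ((-292776/5) * s^0 + (1056) * s^1) <= 0) by (apply mulnp; [apply pow_le; lra | lra]).
  assert (h7 : u^7 * ((-3408) * s^0) <= 0) by (apply mulnp; [apply pow_le; lra | lra]).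
  unfold lamR, clo, chi, dlo. lra.
Qed.

Theorem lemma7p5 (a c d : R) :
  22 / 10 < a ->
  / 192 * (- 768 * a ^ 3 + 768 * a ^ 2 - 160 * a + 7) <= c ->
  c <= / 512 * (- 1536 * a ^ 3 + 1728 * a ^ 2 - 424 * a + 25) ->
  / 2 * (- 6 * a ^ 4 + 6 * a ^ 3 - a ^ 2 - 2 * a * c) <= d ->
  d <= / 2048 * (768 * a ^ 3 - 512 * a ^ 2 - 512 * a * c + 104 * a + 192 * c - 7) ->
  exists k : Z, (4 <= k)%Z /\ lam k a c d < 0.
Proof.
  intros Ha Hc1 Hc2 Hd1 Hd2.
  destruct (archimed (35*a)) as [H1 H2].
  exists (up (35*a)). split.
  { apply le_IZR. lra. }
  change (lam (up (35*a)) a c d) with (lamR (IZR (up (35*a))) a c d).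
  set (x := IZR (up (35*a))) in *.
  assert (Ha' : 11/5 < a) by lra.
  assert (Hx1 : 35*a <= x) by lra.
  assert (Hx2 : x <= 35*a+1) by lra.
  pose proof (Cneg a x Ha' Hx1 Hx2) as HC.
  pose proof (P0neg a x Ha' Hx1 Hx2) as HP0.
  pose proof (P1neg a x Ha' Hx1 Hx2) as HP1.
  assert (Hw : chi a - clo a > 0).
  { unfold chi, clo. assert (0 < a - 11/5) by lra. nra. }
  assert (Hid1 : lamR x a c d = lamR x a c (dlo a c) + (lamR x a 0 1 - lamR x a 0 0)*(d - dlo a c))
    by (unfold lamR, dlo; ring).
  assert (Hid2 : (chi a - clo a) * lamR x a c (dlo a c) =
     (chi a - c) * lamR x a (clo a) (dlo a (clo a)) + (c - clo a) * lamR x a (chi a) (dlo a (chi a)))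
    by (unfold lamR, dlo, chi, clo; field).
  assert (E1 : 0 <= d - dlo a c) by (unfold dlo; lra).
  assert (E2 : 0 <= c - clo a) by (unfold clo; lra).
  assert (E3 : 0 <= chi a - c) by (unfold chi; lra).
  rewrite Hid1.
  set (Cc := lamR x a 0 1 - lamR x a 0 0) in *.
  set (L := lamR x a c (dlo a c)) in *.
  set (P0 := lamR x a (clo a) (dlo a (clo a))) in *.
  set (P1 := lamR x a (chi a) (dlo a (chi a))) in *.
  set (w := chi a - clo a) in *.
  assert (Hws : w = (chi a - c) + (c - clo a)) by (unfold w; ring).
  clearbody Cc L P0 P1 w.
  set (m := Rmax P0 P1).
  assert (Hm : m < 0) by (apply Rmax_lub_lt; assumption).
  assert (Hm0 : P0 <= m) by apply Rmax_l.
  assert (Hm1 : P1 <= m) by apply Rmax_r.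
  clearbody m.
  assert (T1 : (chi a - c) * (P0 - m) <= 0) by (apply mulnp; lra).
  assert (T2 : (c - clo a) * (P1 - m) <= 0) by (apply mulnp; lra).
  assert (T3 : w * (L - m) <= 0) by (rewrite Hws in Hid2 |- *; nra).
  assert (T4 : L - m <= 0).
  { destruct (Rle_or_lt (L - m) 0); auto. nra. }
  assert (T5 : Cc * (d - dlo a c) <= 0) by nra.
  lra.
Qed.
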